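(* Let $m,n\in\mathbb N$. The truncation map $\mathsf{Tr}_{n+1,n}:\mathcal E^{m+n+1}_+\to\mathcal E^{m+n}_+$ commutes with the bar involutions.
   Context: $\mathcal U=U_q(\mathfrak{sl}(\infty))$ over $\mathbb Q(q)$ generated by $E_a,F_a,K_{a,a+1}^{\pm1}$ ($a\in\mathbb Z$), comultiplication $\Delta(E_a)=1\otimes E_a+E_a\otimes K_{a,a+1}^{-1}$, $\Delta(F_a)=F_a\otimes1+K_{a,a+1}\otimes F_a$; bar map $\bar q=q^{-1}$ fixing $E_a,F_a$, inverting $K_{a,a+1}$. $\Lambda^k\mathbb V$: basis $v_{a_1}\wedge\cdots\wedge v_{a_k}$ ($a_1>\cdots>a_k$); for index set $S$, $F_a$ replaces $a$ by $a+1$ if $a\in S,a+1\notin S$ (else $0$), $E_a$ replaces $a+1$ by $a$ if $a+1\in S,a\notin S$ (else $0$), $K_{a,a+1}$ acts by $q^{[a\in S]-[a+1\in S]}$. For $k\in\mathbb N$: $I(m|k)=\{-m,\dots,-1\}\cup\{1,\dots,k\}$; $\mathbb Z^{m+k}_+=\{f:f(-m)>\cdots>f(-1),\ f(1)>\cdots>f(k)\}$, $\mathbb Z^{m+k}_{++}=\{f\in\mathbb Z^{m+k}_+:f(k)\ge1-k\}$. $\mathcal E^{m+k}=\Lambda^m\mathbb V\otimes\Lambda^k\mathbb V$ with basis $\mathcal K_f=v_{f(-m)}\wedge\cdots\wedge v_{f(-1)}\otimes v_{f(1)}\wedge\cdots\wedge v_{f(k)}$, $f\in\mathbb Z^{m+k}_+$;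 $\mathcal E^{m+k}_+$ is the span of $\mathcal K_f$, $f\in\mathbb Z^{m+k}_{++}$. Bruhat ordering: transitive closure of $f<f\cdot\tau_{ij}$ for $i<j$ with $f(i)<f(j)$. The bar involution on $\mathcal E^{m+k}$ is the unique anti-linear involution fixing $\mathcal K_f$ for $f$ minimal in $\mathbb Z^{m+k}_+$, with $\overline{Xu}=\bar X\bar u$ for $X\in\mathcal U$, and $\overline{\mathcal K_f}\in\mathcal K_f+\sum_{g<f}\mathbb Z[q,q^{-1}]\mathcal K_g$. $\mathsf{Tr}_{n+1,n}$ is the linear map $\mathcal K_f\mapsto\mathcal K_{f^{(n)}}$ if $f(n+1)=-n$ and $\mathcal K_f\mapsto0$ otherwise, $f^{(n)}$ the restriction to $I(m|n)$. *)

(* Defs.v *)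
From HB Require Import structures.
From mathcomp Require Import all_boot all_order all_algebra.
From mathcomp Require Import finmap.
From mathcomp Require Import monalg.
From Stdlib Require Import Relations.Relation_Operators.

Set Implicit Arguments.
Unset Strict Implicit.
Unset Printing Implicit Defensive.

Import Order.TTheory GRing.Theory Num.Theory.
Local Open Scope ring_scope.

Definition Qq : fieldType := {fraction {poly rat}}.

Definition qq : Qq := FracField.tofrac ('X : {poly rat}).

Definition ev_qinv (p : {poly rat}) : Qq :=
  (map_poly (fun c : rat => FracField.tofrac (c%:P)) p).[qq^-1].

Definition barQ (x : Qq) : Qq :=
  let r := repr x in ev_qinv (frac r).1 / ev_qinv (frac r).2.

Definition laurent (c : Qq) : Prop :=
  exists (p : {poly int}) (k : nat),
    c = (map_poly (fun z : int => z%:~R : Qq) p).[qq] / qq ^+ k.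

(* An f in Z^{m+k}_+ is encoded as the pair (s, t) with
   s = [f(-m); ...; f(-1)] and t = [f(1); ...; f(k)], both strictly
   decreasing.  K_f = v_{f(-m)} /\ ... /\ v_{f(-1)} (x) v_{f(1)} /\ ... /\ v_{f(k)}. *)
Definition sdec (s : seq int) : bool := sorted (fun a b : int => b < a) s.

Definition wf (m k : nat) (st : seq int * seq int) : bool :=
  [&& size st.1 == m, size st.2 == k, sdec st.1 & sdec st.2].

Definition idx (m k : nat) := {st : seq int * seq int | wf m k st}.

(* E^{m+k} = Lambda^m V (x) Lambda^k V : free Q(q)-module on Z^{m+k}_+ *)
Definition Esp (m k : nat) := {malg Qq[idx m k]}.

Definition Kb (m k : nat) (f : idx m k) : Esp m k := << f >>.

(* basis vector for a pair of sequences (zero if not a valid index;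
   only used on valid indices) *)
Definition mkb (m k : nat) (st : seq int * seq int) : Esp m k :=
  if @insub _ (wf m k) (idx m k) st is Some f then << f >> else 0.

Definition lin_ext (m k m' k' : nat) (b : idx m k -> Esp m' k') (u : Esp m k)
  : Esp m' k' :=
  \sum_(i <- msupp u) u@_i *: b i.

(* Action of U_q(sl(oo)) on Lambda V (index set S given as a sequence). *)
Definition F_seq (a : int) (s : seq int) : option (seq int) :=
  if (a \in s) && (a + 1 \notin s)
  then Some [seq (if x == a then a + 1 else x) | x <- s] else None.

Definition E_seq (a : int) (s : seq int) : option (seq int) :=
  if (a + 1 \in s) && (a \notin s)
  then Some [seq (if x == a + 1 then a else x) | x <- s] else None.

(* K_{a,a+1} acts on v_S by q^(kexp a S) *)
Definition kexp (a : int) (s : seq int) : int :=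
  ((a \in s) : nat)%:Z - ((a + 1 \in s) : nat)%:Z.

(* Action on E^{m+k} via the comultiplication
   Delta(E_a) = 1 (x) E_a + E_a (x) K^{-1},  Delta(F_a) = F_a (x) 1 + K (x) F_a. *)
Definition actF_b (m k : nat) (a : int) (f : idx m k) : Esp m k :=
  let: (s, t) := val f in
  (if F_seq a s is Some s' then mkb m k (s', t) else 0)
  + (if F_seq a t is Some t' then qq ^ (kexp a s) *: mkb m k (s, t') else 0).

Definition actE_b (m k : nat) (a : int) (f : idx m k) : Esp m k :=
  let: (s, t) := val f in
  (if E_seq a t is Some t' then mkb m k (s, t') else 0)
  + (if E_seq a s is Some s' then qq ^ (- kexp a t) *: mkb m k (s', t) else 0).

Definition actK_b (m k : nat) (e : int) (a : int) (f : idx m k) : Esp m k :=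
  let: (s, t) := val f in qq ^ (e * (kexp a s + kexp a t)) *: Kb f.

Definition actF m k a := lin_ext (@actF_b m k a).
Definition actE m k a := lin_ext (@actE_b m k a).
(* actK m k 1 a = K_{a,a+1},  actK m k (-1) a = K_{a,a+1}^{-1} *)
Definition actK m k e a := lin_ext (@actK_b m k e a).

(* Bruhat ordering: on functions I(m|k) -> Z, listed in the order
   -m < ... < -1 < 1 < ... < k; transitive closure of
   f < f.tau_{ij} for i < j with f(i) < f(j). *)
Definition swap_seq (w : seq int) (i j : nat) : seq int :=
  mkseq (fun l => if l == i then nth 0 w j
                  else if l == j then nth 0 w i else nth 0 w l) (size w).

Definition bruhat_step (w w' : seq int) : Prop :=
  exists i j : nat, [/\ (i < j)%N, (j < size w)%N, nth 0 w i < nth 0 w j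
                     & w' = swap_seq w i j].

Definition as_fun (m k : nat) (f : idx m k) : seq int := (val f).1 ++ (val f).2.

Definition bruhat_lt (m k : nat) (g f : idx m k) : Prop :=
  clos_trans (seq int) bruhat_step (as_fun g) (as_fun f).

Definition is_bar_involution (m k : nat) (psi : Esp m k -> Esp m k) : Prop :=
      (forall (c : Qq) (u v : Esp m k), psi (c *: u + v) = barQ c *: psi u + psi v) /\
      (forall u, psi (psi u) = u) /\
      (* compatible with the bar map of U: bar E_a = E_a, bar F_a = F_a,
         bar K_{a,a+1}^{+-1} = K_{a,a+1}^{-+1}; by anti-linearity this is
         equivalent to psi (X u) = bar X (psi u) for all X in U *)
      (forall a u, psi (actE a u) = actE a (psi u)) /\
      (forall a u, psi (actF a u) = actF a (psi u)) /\
      (forall e a u, (e == 1) || (e == -1) -> psi (actK e a u) = actK (- e) a (psi u)) /\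
      (forall f : idx m k, (forall g : idx m k, ~ bruhat_lt g f) -> psi (Kb f) = Kb f) /\
      (forall f g : idx m k,
         laurent ((psi (Kb f))@_g) /\
         (g = f -> (psi (Kb f))@_g = 1) /\
         (g <> f -> (psi (Kb f))@_g != 0 -> bruhat_lt g f)).

Definition plus_idx (m k : nat) (f : idx m k) : bool :=
  (k == 0)%N || (1 - k%:Z <= nth 0 (val f).2 k.-1).

Definition in_Eplus (m k : nat) (u : Esp m k) : Prop :=
  forall f, f \in msupp u -> plus_idx f.

Definition tr_b (m n : nat) (f : idx m n.+1) : Esp m n :=
  if nth 0 (val f).2 n == - n%:Z then mkb m n ((val f).1, take n (val f).2) else 0.

Definition Tr (m n : nat) : Esp m n.+1 -> Esp m n := lin_ext (@tr_b m n).

(* Main.v *)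
Require Import Defs.
From HB Require Import structures.
From mathcomp Require Import all_boot all_order all_algebra.
From mathcomp Require Import finmap.
From mathcomp Require Import monalg.
From mathcomp Require Import zify.
From Stdlib Require Import Relations.Relation_Operators.
Import Order.TTheory GRing.Theory Num.Theory.
Local Open Scope ring_scope.

Lemma size_swap w i j : size (swap_seq w i j) = size w.
Proof. by rewrite /swap_seq size_mkseq. Qed.

Lemma nth_swap w i j l : (l < size w)%N ->
  nth 0 (swap_seq w i j) l =
  if l == i then nth 0 w j else if l == j then nth 0 w i else nth 0 w l.
Proof. by move=> h; rewrite /swap_seq nth_mkseq. Qed.

Lemma count_take_swap (P : pred int) w i j p :
  (i < j)%N -> (j < size w)%N -> (p <= size w)%N ->
  (count P (take p (swap_seq w i j)) + (if (i < p <= j)%N then P (nth (0:int) w i) else false)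
  = count P (take p w) + (if (i < p <= j)%N then P (nth (0:int) w j) else false))%N.
Proof.
move=> ij jw; elim: p => [|p IH] hp; first by rewrite !take0.
have hp' : (p < size w)%N by [].
rewrite (take_nth 0) ?size_swap // (take_nth 0) //.
rewrite -!cats1 !count_cat /= !addn0 nth_swap //.
have := IH (ltnW hp); clear IH.
case: eqP => [pi|npi];
  [subst p; move: (P (nth 0 w i)) (P (nth 0 w j)) => a b
  | case: eqP => [pj|npj];
    [subst p; move: (P (nth 0 w i)) (P (nth 0 w j)) => a b
    | move: (P (nth 0 w i)) (P (nth 0 w j)) (P (nth 0 w p)) => a b c]];
case: ifP => c1; case: ifP => c2; rewrite ?addn0; move=> H; lia.
Qed.

Definition geq_pred (c : int) : pred int := fun x => c <= x.

Lemma step_inv w w' : bruhat_step w w' ->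
  [/\ size w' = size w, perm_eq w w',
      forall c p, (count (geq_pred c) (take p w) <= count (geq_pred c) (take p w'))%N
    & nth 0 w' (size w).-1 <= nth 0 w (size w).-1].
Proof.
move=> [i [j [ij jw lt ->]]].
have perm : perm_eq w (swap_seq w i j).
  apply/permP => P.
  have := count_take_swap P _ _ _ _ ij jw (leqnn (size w)).
  rewrite take_size -{1}(size_swap w i j) take_size.
  have -> : (i < size w <= j)%N = false by lia.
  by rewrite !addn0 => ->.
split => //; first exact: size_swap.
- move=> c p; case: (leqP p (size w)) => hp.
    have := count_take_swap (geq_pred c) _ _ _ _ ij jw hp.
    have imp : geq_pred c (nth 0 w i) -> geq_pred c (nth 0 w j).
      by rewrite /geq_pred => h; apply: le_trans h (ltW lt).
    move: imp; case: ifP => _; rewrite ?addn0; last by move=> _ ->.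
    move=> imp H.
    have key : (geq_pred c (nth 0%R w i) <= geq_pred c (nth 0%R w j))%N.
      by case: (geq_pred c (nth 0 w i)) imp => // /(_ isT) ->.
    move: H key; move: (geq_pred c (nth 0%R w i)) (geq_pred c (nth 0%R w j)) => a b.
    move: (count _ _) (count _ _) => x y; case: a; case: b => /=; lia.
  rewrite !take_oversize ?size_swap; try lia.
  by rewrite (permP perm).
- rewrite nth_swap; last by lia.
  have -> : ((size w).-1 == i) = false by apply/eqP; lia.
  case: eqP => [e|_]; last exact: lexx.
  by rewrite e; apply: ltW.
Qed.

Lemma bruhat_inv a b : clos_trans _ bruhat_step a b ->
  [/\ size b = size a, perm_eq a b,
      forall c p, (count (geq_pred c) (take p a) <= count (geq_pred c) (take p b))%N
    & nth 0 b (size a).-1 <= nth 0 a (size a).-1].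
Proof.
elim=> [x y /step_inv //|x y z _ [s1 p1 c1 l1] _ [s2 p2 c2 l2]].
split.
- by rewrite s2 s1.
- exact: perm_trans p1 p2.
- by move=> c p; apply: leq_trans (c1 c p) (c2 c p).
- by rewrite -s1; apply: le_trans l2 _; rewrite s1.
Qed.

Lemma gt_trans : transitive (fun a b : int => b < a).
Proof. by move=> b a c h1 h2; apply: lt_trans h2 h1. Qed.

Lemma gt_irr : irreflexive (fun a b : int => b < a).
Proof. by move=> a; rewrite ltxx. Qed.

Lemma sdec_uniq s : sdec s -> uniq s.
Proof. exact: (@sorted_uniq _ (fun a b : int => b < a) gt_trans gt_irr). Qed.

Lemma count_mem_cat (s t : seq int) v : uniq s -> uniq t ->
  count_mem v (s ++ t) = ((v \in s) + (v \in t))%N.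
Proof. by move=> us ut; rewrite count_cat !count_uniq_mem. Qed.

Lemma uniq_base s t s' t' :
  sdec s -> sdec t -> sdec s' -> sdec t' -> size s' = size s ->
  perm_eq (s' ++ t') (s ++ t) ->
  (forall c, count (geq_pred c) s' <= count (geq_pred c) s)%N ->
  (forall x y, x \in s -> x \notin t -> y \in t -> x < y) ->
  s' = s /\ t' = t.
Proof.
move=> hs ht hs' ht' ss pe hc base.
have us := sdec_uniq _ hs; have ut := sdec_uniq _ ht.
have us' := sdec_uniq _ hs'; have ut' := sdec_uniq _ ht'.
have cnt v : ((v \in s') + (v \in t') = (v \in s) + (v \in t))%N.
  by rewrite -!count_mem_cat //; apply: (permP pe (pred1 v)).
have sub : {subset s' <= s}.
  move=> b bs'; case: (boolP (b \in s)) => // bns; exfalso.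
  have bt : b \in t by have := cnt b; rewrite bs' (negbTE bns); case: (b \in t).
  have H : {subset filter (geq_pred b) s <= filter (predI (geq_pred b) (predC1 b)) s'}.
    move=> a; rewrite !mem_filter => /andP[ab as_].
    have anb : a != b by apply: contraNneq bns => <-.
    rewrite /= ab anb /=; apply/negPn/negP => ans'.
    have ant : a \notin t.
      by apply/negP => at_; have := cnt a; rewrite as_ at_ (negbTE ans'); case: (a \in t').
    have := base a b as_ ant bt; rewrite /geq_pred in ab.
    by rewrite ltNge ab.
  have := uniq_leq_size (filter_uniq _ us) H; rewrite !size_filter.
  have e1 := count_predUI (predI (geq_pred b) (predC1 b)) (pred1 b) s'.
  have e2 : count (predU (predI (geq_pred b) (predC1 b)) (pred1 b)) s' = count (geq_pred b) s'.
    apply: eq_count => x /=; rewrite /geq_pred; case: eqP => [->|] /=; by rewrite ?lexx ?andbT ?orbF.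
  have e3 : count (predI (predI (geq_pred b) (predC1 b)) (pred1 b)) s' = 0%N.
    by apply/eqP; rewrite -leqn0 leqNgt -has_count; apply/hasP => -[x _] /= /andP[/andP[_ /negPf ->]].
  have e4 : count (pred1 b) s' = 1%N by rewrite count_uniq_mem // bs'.
  have := hc b; move: e1; rewrite e2 e3 e4 addn0 => -> h1 h2.
  by have := leq_trans h1 h2; rewrite addn1 ltnn.
have [_ eqset] := uniq_min_size us' sub (eq_leq (esym ss)).
have es : s' = s by apply: (irr_sorted_eq gt_trans gt_irr hs' hs eqset).
subst s'; split => //.
move: pe; rewrite perm_cat2l => pe.
by apply: (irr_sorted_eq gt_trans gt_irr ht' ht); apply: perm_mem.
Qed.

Lemma walkup (t : seq int) x : x \notin t -> forall y, y \in t -> y < x ->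
  exists2 y', y' \in t & (y' + 1 \notin t) && (y' < x).
Proof.
move=> xt y; move: {2}(absz (x - y)) (erefl (absz (x - y))) => d.
elim: d y => [|d IH] y hd yt yx; first by lia.
case: (boolP (y + 1 \in t)) => [y1t|y1t]; last by exists y => //; rewrite y1t yx.
have ne : y + 1 != x by apply: contraNneq xt => <-.
move/eqP: ne => ne.
apply: (IH (y + 1)) => //; lia.
Qed.

Definition repl (v w z : int) := if z == v then w else z.

Lemma sdec_repl v w t : sdec t -> w \notin t -> (w = v + 1) \/ (w = v - 1) ->
  sdec (map (repl v w) t).
Proof.
move=> ht wt hw; rewrite /sdec sorted_map.
apply: (sub_in_sorted (P := mem t)) ht; last exact: allss.
move=> a b ha hb /= ba; rewrite /repl.
have aw : a != w by apply: contraNneq wt => <-.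
have bw : b != w by apply: contraNneq wt => <-.
move/eqP: aw => aw; move/eqP: bw => bw.
case: eqP => [av|av]; case: eqP => [bv|bv]; lia.
Qed.

Lemma E_seq_Some a s s2 : E_seq a s = Some s2 ->
  [/\ a + 1 \in s, a \notin s & s2 = map (repl (a + 1) a) s].
Proof. by rewrite /E_seq; case: ifP => // /andP[h1 h2] [<-]. Qed.

Lemma E_seq_repl y t : y \in t -> y + 1 \notin t ->
  E_seq y (map (repl y (y + 1)) t) = Some t.
Proof.
move=> yt y1t; rewrite /E_seq.
have -> : y + 1 \in map (repl y (y + 1)) t.
  by apply/mapP; exists y => //; rewrite /repl eqxx.
have -> : y \notin map (repl y (y + 1)) t.
  apply/mapP => -[z zt]; rewrite /repl; case: eqP => [_|ne] h; first by lia.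
  by apply: ne; rewrite h.
congr Some; rewrite -map_comp -[RHS]map_id; apply/eq_in_map => z zt /=; rewrite /repl.
case: (z =P y) => [->|ne]; first by rewrite !eqxx.
case: (z =P (y + 1)) => // e; by move: y1t; rewrite -e zt.
Qed.

Lemma E_seq_wf a t t2 : sdec t -> E_seq a t = Some t2 -> sdec t2 /\ size t2 = size t.
Proof.
move=> ht /E_seq_Some [h1 h2 ->]; split; last by rewrite size_map.
apply: sdec_repl => //; right; lia.
Qed.

Lemma E_seq_rcons a t z : z != a -> z != a + 1 ->
  E_seq a (rcons t z) = omap (fun t2 => rcons t2 z) (E_seq a t).
Proof.
move=> za za1; rewrite /E_seq !mem_rcons !in_cons.
have -> : (a + 1 == z) = false by rewrite eq_sym (negbTE za1).
have -> : (a == z) = false by rewrite eq_sym (negbTE za).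
rewrite /=; case: ifP => // _ /=; rewrite map_rcons.
by rewrite (negbTE za1).
Qed.

Lemma kexp_rcons a t z : z != a -> z != a + 1 -> kexp a (rcons t z) = kexp a t.
Proof.
move=> za za1; rewrite /kexp !mem_rcons !in_cons.
have -> : (a + 1 == z) = false by rewrite eq_sym (negbTE za1).
by have -> : (a == z) = false by rewrite eq_sym (negbTE za).
Qed.

Lemma rcons_take_nth (t : seq int) n : size t = n.+1 -> t = rcons (take n t) (nth 0 t n).
Proof. by move=> st; rewrite -take_nth ?st // -st take_size. Qed.

Set Implicit Arguments.
Unset Strict Implicit.

Lemma lin_extEw m k m' k' (b : idx m k -> Esp m' k') (u : Esp m k) (d : {fset idx m k}) :
  (msupp u `<=` d)%fset -> lin_ext b u = \sum_(i <- d) u@_i *: b i.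
Proof.
move=> le; rewrite /lin_ext (big_fset_incl _ le) // => x _ /mcoeff_outdom ->.
by rewrite scale0r.
Qed.

Lemma lin_extL m k m' k' (b : idx m k -> Esp m' k') c u v :
  lin_ext b (c *: u + v) = c *: lin_ext b u + lin_ext b v.
Proof.
pose d := (msupp u `|` msupp v)%fset.
have hu : (msupp u `<=` d)%fset by apply: fsubsetUl.
have hv : (msupp v `<=` d)%fset by apply: fsubsetUr.
have huv : (msupp (c *: u + v) `<=` d)%fset.
  apply: fsubset_trans (msuppD_le _ _) _; apply: fsetSU; exact: msuppZ_le.
rewrite (lin_extEw b huv) (lin_extEw b hu) (lin_extEw b hv) scaler_sumr -big_split /=.
by apply: eq_bigr => i _; rewrite mcoeffD mcoeffZ scalerDl scalerA.
Qed.

Lemma lin_ext0 m k m' k' (b : idx m k -> Esp m' k') : lin_ext b 0 = 0.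
Proof. by rewrite /lin_ext msupp0 big_nil. Qed.

Lemma lin_extZ m k m' k' (b : idx m k -> Esp m' k') c u :
  lin_ext b (c *: u) = c *: lin_ext b u.
Proof. by have := lin_extL b c u 0; rewrite !addr0 lin_ext0 addr0. Qed.

Lemma lin_extD m k m' k' (b : idx m k -> Esp m' k') u v :
  lin_ext b (u + v) = lin_ext b u + lin_ext b v.
Proof. by have := lin_extL b 1 u v; rewrite !scale1r. Qed.

Lemma lin_ext_sum m k m' k' (b : idx m k -> Esp m' k') (I : Type) (r : seq I) (F : I -> Esp m k) :
  lin_ext b (\sum_(i <- r) F i) = \sum_(i <- r) lin_ext b (F i).
Proof.
elim: r => [|x r IH]; first by rewrite !big_nil lin_ext0.
by rewrite !big_cons lin_extD IH.
Qed.

Lemma lin_extU m k m' k' (b : idx m k -> Esp m' k') f : lin_ext b << f >> = b f.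
Proof. by rewrite /lin_ext msuppU oner_eq0 big_seq_fset1 mcoeffUU scale1r. Qed.

Lemma malgE m k (u : Esp m k) : u = \sum_(i <- msupp u) u@_i *: << i >>.
Proof.
rewrite {1}(monalgE u); apply: eq_bigr => i _; apply/malgP => j.
rewrite mcoeffZ.
have h1 := (mcoeffU i (u@_i) j).
have h2 := (mcoeffU i (1 : Qq) j).
apply: (etrans h1).
apply: (etrans _ (congr1 (fun x => u@_i * x) (esym h2))).
by case: (i == j); rewrite ?mulr1n ?mulr0n ?mulr1 ?mulr0.
Qed.


Definition antilin m k (psi : Esp m k -> Esp m k) :=
  forall (c : Qq) (u v : Esp m k), psi (c *: u + v) = barQ c *: psi u + psi v.

Lemma psi0 m k (psi : Esp m k -> Esp m k) :
  antilin psi -> (forall u, psi (psi u) = u) -> psi 0 = 0.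
Proof.
move=> HA inv; have := HA 1 (psi 0) 0.
rewrite scale1r addr0 inv scaler0 add0r.
move=> h; exact: (esym h).
Qed.

Lemma psi_sumZ m k (psi : Esp m k -> Esp m k) (I : Type) (r : seq I) (c : I -> Qq) (x : I -> Esp m k) :
  antilin psi -> (forall u, psi (psi u) = u) ->
  psi (\sum_(i <- r) c i *: x i) = \sum_(i <- r) barQ (c i) *: psi (x i).
Proof.
move=> HA inv; elim: r => [|i r IH].
  rewrite [X in psi X]big_nil [X in _ = X]big_nil.
  exact: psi0 HA inv.
rewrite [X in psi X]big_cons [X in _ = X]big_cons.
by rewrite HA IH.
Qed.


Lemma bar_antilin m k (psi : Esp m k -> Esp m k) : is_bar_involution psi -> antilin psi.
Proof. by case. Qed.

Lemma bar_inv m k (psi : Esp m k -> Esp m k) : is_bar_involution psi -> forall u, psi (psi u) = u.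
Proof. by case=> _ []. Qed.

Lemma bar_E m k (psi : Esp m k -> Esp m k) : is_bar_involution psi ->
  forall a u, psi (actE a u) = actE a (psi u).
Proof. by case=> _ [_ []]. Qed.

Lemma bar_diag m k (psi : Esp m k -> Esp m k) f : is_bar_involution psi -> (psi (Kb f))@_f = 1.
Proof. by case=> _ [_ [_ [_ [_ [_ H]]]]]; have [_ [h _]] := H f f; apply: h. Qed.

Lemma bar_lower m k (psi : Esp m k -> Esp m k) f g : is_bar_involution psi ->
  g != f -> (psi (Kb f))@_g != 0 -> bruhat_lt g f.
Proof.
case=> _ [_ [_ [_ [_ [_ H]]]]] ne nz; have [_ [_ h]] := H f g.
by apply: h nz => e; rewrite e eqxx in ne.
Qed.

Lemma psi_fix m k (psi : Esp m k -> Esp m k) f : is_bar_involution psi ->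
  (forall g, g != f -> bruhat_lt g f -> False) -> psi (Kb f) = Kb f.
Proof.
move=> B H; apply/malgP => g.
case: (g =P f) => [->|/eqP ne].
  by rewrite (bar_diag f B) /Kb mcoeffUU.
have -> : (psi (Kb f))@_g = 0.
  by apply/eqP; apply: contraT => nz; case: (H g ne (bar_lower B ne nz)).
by rewrite /Kb mcoeffU eq_sym (negbTE ne) mulr0n.
Qed.

Lemma Tr_psi_diag m n (psi : Esp m n.+1 -> Esp m n.+1) F : is_bar_involution psi ->
  (forall g, g != F -> bruhat_lt g F -> tr_b g = 0) -> Tr (psi (Kb F)) = tr_b F.
Proof.
move=> B H; set w := psi (Kb F).
have Fw : F \in msupp w by rewrite -mcoeff_neq0 /w (bar_diag F B) oner_eq0.
rewrite /Tr /lin_ext (big_fsetD1 F Fw) /= {1}/w (bar_diag F B) scale1r.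
rewrite big1_fset; first by rewrite addr0.
move=> g; rewrite in_fsetD1 => /andP[gF gw] _.
by rewrite H ?scaler0 //; apply: bar_lower B gF _; rewrite mcoeff_neq0.
Qed.

Lemma mkbK m k st (H : wf m k st) : mkb m k st = Kb (Sub st H : idx m k).
Proof. by rewrite /mkb insubT. Qed.

Lemma mkb_nwf m k st : ~~ wf m k st -> mkb m k st = 0.
Proof. by move=> h; rewrite /mkb insubN. Qed.

Lemma Tr_mkb m n st : Tr (mkb m n.+1 st) =
  if wf m n.+1 st then (if nth 0 st.2 n == - n%:Z then mkb m n (st.1, take n st.2) else 0) else 0.
Proof.
case: (boolP (wf m n.+1 st)) => h.
  by rewrite (mkbK h) /Tr /Kb lin_extU /tr_b SubK.
by rewrite mkb_nwf // /Tr lin_ext0.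
Qed.

Lemma actE_mkb m k a s t : wf m k (s, t) -> actE a (mkb m k (s, t)) =
  (if E_seq a t is Some t2 then mkb m k (s, t2) else 0) +
  (if E_seq a s is Some s2 then qq ^ (- kexp a t) *: mkb m k (s2, t) else 0).
Proof. by move=> H; rewrite (mkbK H) /actE /Kb lin_extU /actE_b SubK. Qed.

Lemma take_rcons_size (t : seq int) z n : size t = n -> take n (rcons t z) = t.
Proof. by move=> h; rewrite -cats1 take_size_cat. Qed.

Lemma nth_rcons_size (t : seq int) z n : size t = n -> nth 0 (rcons t z) n = z.
Proof. by move=> h; rewrite nth_rcons h ltnn eqxx. Qed.

Lemma TrE_b m n y (f : idx m n.+1) : - n%:Z < y -> Tr (actE_b y f) = actE y (tr_b f).
Proof.
move=> hy; case: f => [[s t] H]; rewrite /actE_b /tr_b /=.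
move: (H) => /and4P [/eqP /= ss /eqP /= st hs ht].
rewrite /Tr lin_extD.
case: (nth 0 t n =P - n%:Z) => [ln|ln].
- have [t0 et st0] : exists2 t0, t = rcons t0 (- n%:Z) & size t0 = n.
    exists (take n t); first by rewrite {1}(rcons_take_nth _ _ st) ln.
    by rewrite size_take st leqnn.
  subst t.
  have z1 : - n%:Z != y by rewrite lt_eqF.
  have z2 : - n%:Z != y + 1 by apply/eqP; lia.
  rewrite E_seq_rcons // kexp_rcons // take_rcons_size //.
  have ht0 : sdec t0.
    by have := take_sorted n ht; rewrite take_rcons_size.
  have wf0 : wf m n (s, t0) by apply/and4P; split => //; apply/eqP.
  rewrite (actE_mkb _ wf0).
  case E1: (E_seq y t0) => [t2|] /=; case E2: (E_seq y s) => [s2|] /=.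
  + rewrite lin_extZ -!/(Tr _) !Tr_mkb /=.
    have [ht2 st2] := E_seq_wf _ _ _ ht0 E1.
    have [hs2 ss2] := E_seq_wf _ _ _ hs E2.
    have w1 : wf m n.+1 (s, rcons t2 (- n%:Z)).
      apply/and4P; split => //; first by apply/eqP.
        by rewrite size_rcons st2 st0.
      have := E_seq_rcons _ t0 _ z1 z2; rewrite E1 /= => e.
      by have [] := E_seq_wf _ _ _ ht e.
    have w2 : wf m n.+1 (s2, rcons t0 (- n%:Z)).
      by apply/and4P; split => //; apply/eqP; rewrite ?ss2 ?size_rcons ?st0.
    rewrite w1 w2 /=.
    have st2n : size t2 = n by rewrite st2.
    rewrite (nth_rcons_size _ st2n) (nth_rcons_size _ st0) eqxx.
    by rewrite (take_rcons_size _ st2n) (take_rcons_size _ st0).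
  + rewrite lin_ext0 addr0 -!/(Tr _) !Tr_mkb /=.
    have [ht2 st2] := E_seq_wf _ _ _ ht0 E1.
    have w1 : wf m n.+1 (s, rcons t2 (- n%:Z)).
      apply/and4P; split => //; first by apply/eqP.
        by rewrite size_rcons st2 st0.
      have := E_seq_rcons _ t0 _ z1 z2; rewrite E1 /= => e.
      by have [] := E_seq_wf _ _ _ ht e.
    by rewrite w1 /= !nth_rcons_size ?st2 ?st0 // eqxx !take_rcons_size ?st2 // addr0.
  + rewrite lin_ext0 add0r lin_extZ -!/(Tr _) !Tr_mkb /=.
    have [hs2 ss2] := E_seq_wf _ _ _ hs E2.
    have w2 : wf m n.+1 (s2, rcons t0 (- n%:Z)).
      by apply/and4P; split => //; apply/eqP; rewrite ?ss2 ?size_rcons ?st0.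
    by rewrite w2 /= !nth_rcons_size ?st0 // eqxx !take_rcons_size ?st0 // add0r.
  + by rewrite !lin_ext0 addr0.
- rewrite /actE lin_ext0.
  have P1 : forall t2, E_seq y t = Some t2 -> Tr (mkb m n.+1 (s, t2)) = 0.
    move=> t2 /E_seq_Some [_ _ ->]; rewrite Tr_mkb /=.
    case: ifP => // _; rewrite (nth_map 0); last by rewrite st.
    have -> : (repl (y + 1) y (nth 0 t n) == - n%:Z) = false.
      rewrite /repl; case: (nth 0 t n =P y + 1) => _; first by rewrite (gt_eqF hy).
      by apply/eqP.
    by [].
  have P2 : forall s2, Tr (mkb m n.+1 (s2, t)) = 0.
    move=> s2; rewrite Tr_mkb /=; case: ifP => // _.
    by have -> : (nth 0 t n == - n%:Z) = false by apply/eqP.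
  case E1: (E_seq y t) => [t2|] /=; case E2: (E_seq y s) => [s2|] /=.
  + by rewrite lin_extZ -!/(Tr _) P1 // P2 scaler0 addr0.
  + by rewrite lin_ext0 addr0 -!/(Tr _) P1.
  + by rewrite lin_ext0 add0r lin_extZ -!/(Tr _) P2 scaler0.
  + by rewrite lin_ext0 addr0.
Qed.

Lemma TrE m n y (w : Esp m n.+1) : - n%:Z < y -> Tr (actE y w) = actE y (Tr w).
Proof.
move=> hy; rewrite (malgE w) /Tr /actE.
rewrite [X in lin_ext _ X = _]lin_ext_sum [X in _ = lin_ext _ X]lin_ext_sum.
rewrite [LHS]lin_ext_sum [RHS]lin_ext_sum.
apply: eq_bigr => f _.
rewrite [X in lin_ext _ X = _]lin_extZ [X in _ = lin_ext _ X]lin_extZ.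
rewrite [LHS]lin_extZ [RHS]lin_extZ.
rewrite (lin_extU (actE_b y) f) (lin_extU (@tr_b m n) f).
by congr (_ *: _); apply: TrE_b.
Qed.

Lemma no_lower_base m k (h : idx m k) :
  (forall x y, x \in (val h).1 -> x \notin (val h).2 -> y \in (val h).2 -> x < y) ->
  forall g, g != h -> bruhat_lt g h -> False.
Proof.
move=> base g ne /bruhat_inv [sz pe cn _].
case/and4P: (valP g) => /eqP sg1 /eqP sg2 hg1 hg2.
case/and4P: (valP h) => /eqP sh1 /eqP sh2 hh1 hh2.
have [e1 e2] : (val g).1 = (val h).1 /\ (val g).2 = (val h).2.
  apply: uniq_base => //; first by rewrite sg1 sh1.
  move=> c; have := cn c m; rewrite /as_fun (take_size_cat _ sg1) (take_size_cat _ sh1).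
  by [].
apply/(negP ne)/eqP/val_inj.
by rewrite [val g]surjective_pairing [val h]surjective_pairing e1 e2.
Qed.

Lemma perm_rcons2 (a b : seq int) z : perm_eq (rcons a z) (rcons b z) -> perm_eq a b.
Proof. by rewrite -!cats1 perm_cat2r. Qed.

Lemma Tr_base m n (h : idx m n) (F : idx m n.+1) :
  val F = ((val h).1, rcons (val h).2 (- n%:Z)) ->
  (forall x y, x \in (val h).1 -> x \notin (val h).2 -> y \in (val h).2 -> x < y) ->
  forall g, g != F -> bruhat_lt g F -> tr_b g = 0.
Proof.
move=> eF base g ne /bruhat_inv [sz pe cn _].
rewrite /tr_b; case: eqP => // last.
exfalso.
case/and4P: (valP g) => /eqP sg1 /eqP sg2 hg1 hg2.
case/and4P: (valP h) => /eqP sh1 /eqP sh2 hh1 hh2.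
have eg2 : (val g).2 = rcons (take n (val g).2) (- n%:Z).
  by rewrite {1}(rcons_take_nth _ _ sg2) last.
have [e1 e2] : (val g).1 = (val h).1 /\ take n (val g).2 = (val h).2.
  apply: uniq_base => //.
  - exact: take_sorted.
  - by rewrite sg1 sh1.
  - apply: perm_rcons2 (- n%:Z) _.
    by move: pe; rewrite /as_fun eF /= {1}eg2 -!rcons_cat.
  - move=> c; have := cn c m; rewrite /as_fun eF /= (take_size_cat _ sg1) (take_size_cat _ sh1).
    by [].
apply/(negP ne)/eqP/val_inj.
by rewrite [val g]surjective_pairing eF eg2 e1 e2.
Qed.

Definition pl (n : nat) (t : seq int) : bool := (n == 0)%N || (1 - n%:Z <= nth 0 t n.-1).

Definition Fmu (x z : int) : nat := if z < x then absz (x - z) else 0%N.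

Definition mu (st : seq int * seq int) : nat :=
  \sum_(x <- st.1) \sum_(z <- st.2) Fmu x z.

Lemma pl_ge n t : size t = n -> sdec t -> pl n t -> forall y, y \in t -> - n%:Z < y.
Proof.
move=> st ht hp y /(nthP 0) [i ilt <-].
move: hp; rewrite /pl; case: eqP => [n0|n0] /=; first by move: ilt; rewrite st n0.
move=> hp.
have ilt' : (i <= n.-1)%N by rewrite st in ilt; lia.
case: (ltngtP i n.-1) => [lt|gt|eq].
- have := sorted_ltn_nth gt_trans 0 ht; move/(_ i n.-1).
  rewrite !inE st => H.
  have h : nth 0 t n.-1 < nth 0 t i by apply: H => //; lia.
  move: hp h; move: (nth 0 t n.-1) (nth 0 t i) => a b; lia.
- lia.
- move: hp; rewrite -eq; move: (nth 0 t i) => a; lia.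
Qed.

Lemma iota_wf m n s t : wf m n (s, t) -> pl n t -> wf m n.+1 (s, rcons t (- n%:Z)).
Proof.
case/and4P => /eqP /= ss /eqP /= st hs ht hp.
apply/and4P; split => //=; [by rewrite ss | by rewrite size_rcons st | ].
have hge := pl_ge st ht hp.
move: ht hge; case: t {st hp} => [|a t'] ht hge //=.
rewrite /sdec /= rcons_path; apply/andP; split => //.
by apply: hge; apply: mem_last.
Qed.

Lemma sum_lt_seq (T : eqType) (r : seq T) (F G : T -> nat) x0 :
  uniq r -> x0 \in r -> (forall x, x \in r -> F x <= G x)%N -> (F x0 < G x0)%N ->
  (\sum_(x <- r) F x < \sum_(x <- r) G x)%N.
Proof.
move=> ur xr le lt.
rewrite (bigD1_seq x0 xr ur) (bigD1_seq x0 xr ur) /=.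
have h : (\sum_(i <- r | i != x0) F i <= \sum_(i <- r | i != x0) G i)%N.
  rewrite big_seq_cond [X in (_ <= X)%N]big_seq_cond; apply: leq_sum => i /andP[ir _]; exact: (le i ir).
move: h lt; move: (\sum_(i <- r | i != x0) F i) (\sum_(i <- r | i != x0) G i) (F x0) (G x0).
move=> a b c d; lia.
Qed.

Lemma Fmu_le_z x z z' : z <= z' -> (Fmu x z' <= Fmu x z)%N.
Proof. by rewrite /Fmu => h; case: ifP => h1; case: ifP => h2; lia. Qed.

Lemma Fmu_le_x x x' z : x' <= x -> (Fmu x' z <= Fmu x z)%N.
Proof. by rewrite /Fmu => h; case: ifP => h1; case: ifP => h2; lia. Qed.

Lemma Fmu_lt x y : y < x -> (Fmu x (y + 1) < Fmu x y)%N.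
Proof. by rewrite /Fmu => h; case: ifP => h1; case: ifP => h2; lia. Qed.

Lemma mu_step1 s t y x : uniq s -> uniq t -> y \in t -> x \in s -> y < x ->
  (mu (s, map (repl y (y + 1)) t) < mu (s, t))%N.
Proof.
move=> us ut yt xs yx; rewrite /mu /=.
have inner : forall x', (\sum_(z <- map (repl y (y + 1)) t) Fmu x' z
                        = \sum_(z <- t) Fmu x' (repl y (y + 1) z))%N.
  by move=> x'; rewrite big_map.
apply: (sum_lt_seq us xs).
  move=> x' _; rewrite inner; apply: leq_sum => z _; apply: Fmu_le_z.
  by rewrite /repl; case: eqP => [->|_] //; lia.
rewrite inner; apply: (sum_lt_seq ut yt).
  move=> z _; apply: Fmu_le_z; by rewrite /repl; case: eqP => [->|_] //; lia.
by rewrite /repl eqxx; apply: Fmu_lt.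
Qed.

Lemma mu_step2 s t y : (mu (map (repl (y + 1) y) s, t) <= mu (s, t))%N.
Proof.
rewrite /mu /= big_map; apply: leq_sum => x _; apply: leq_sum => z _.
by apply: Fmu_le_x; rewrite /repl; case: eqP => [->|_] //; lia.
Qed.

Lemma eq_comb m k (a : Qq) (x x' y y' : Esp m k) : x = x' -> y = y' -> a *: x + y = a *: x' + y'.
Proof. by move=> -> ->. Qed.

Lemma core m n (psi1 : Esp m n.+1 -> Esp m n.+1) (psi2 : Esp m n -> Esp m n) s t :
  is_bar_involution psi1 -> is_bar_involution psi2 ->
  (forall s' t', (mu (s', t') < mu (s, t))%N -> wf m n (s', t') -> pl n t' ->
     Tr (psi1 (mkb m n.+1 (s', rcons t' (- n%:Z)))) = psi2 (mkb m n (s', t'))) ->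
  wf m n (s, t) -> pl n t ->
  Tr (psi1 (mkb m n.+1 (s, rcons t (- n%:Z)))) = psi2 (mkb m n (s, t)).
Proof.
move=> B1 B2 IH hwf hpl.
move: (hwf) => /and4P [/eqP /= ss /eqP /= st hs ht].
have us := sdec_uniq _ hs; have ut := sdec_uniq _ ht.
case: (boolP (has (fun x => has (fun y => (y + 1 \notin t) && (y < x)) t) s)) => [hb|nb].
- case/hasP: hb => x xs /hasP [y yt /andP [y1t yx]].
  pose t' := map (repl y (y + 1)) t.
  have ht' : sdec t' by apply: sdec_repl => //; left.
  have st' : size t' = n by rewrite size_map.
  have hy : - n%:Z < y by apply: (pl_ge st ht hpl).
  have hpl' : pl n t'.
    move: hpl; rewrite /pl; case: eqP => //= n0 hp.
    rewrite (nth_map 0); last by rewrite st; lia.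
    rewrite /repl; case: eqP => [e|_]; last by []. 
    rewrite e in hp; lia.
  have wf' : wf m n (s, t') by apply/and4P; split => //; apply/eqP.
  have mu' : (mu (s, t') < mu (s, t))%N by apply: mu_step1 yt xs yx.
  have IH' := IH s t' mu' wf' hpl'.
  have Et' : E_seq y t' = Some t by apply: E_seq_repl.
  have z1 : - n%:Z != y by rewrite lt_eqF.
  have z2 : - n%:Z != y + 1 by apply/eqP; lia.
  have Et'r : E_seq y (rcons t' (- n%:Z)) = Some (rcons t (- n%:Z)).
    by rewrite E_seq_rcons // Et'.
  have kx : kexp y (rcons t' (- n%:Z)) = kexp y t' by apply: kexp_rcons.
  have iwf' := iota_wf wf' hpl'.
  have A1 := actE_mkb y iwf'; rewrite Et'r kx in A1.
  have A2 := actE_mkb y wf'; rewrite Et' in A2.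
  case E2: (E_seq y s) => [s2|] in A1 A2.
  + have [y1s yns es2] := E_seq_Some _ _ _ E2.
    have [hs2 ss2] := E_seq_wf _ _ _ hs E2.
    have wf'' : wf m n (s2, t') by apply/and4P; split; rewrite //= ?ss2 ?ss ?st'.
    have mu'' : (mu (s2, t') < mu (s, t))%N.
      apply: leq_ltn_trans mu'; rewrite es2; exact: mu_step2.
    have IH'' := IH s2 t' mu'' wf'' hpl'.
    set c := qq ^ (- kexp y t') in A1 A2.
    have K1 : mkb m n.+1 (s, rcons t (- n%:Z)) =
              (- c) *: mkb m n.+1 (s2, rcons t' (- n%:Z)) + actE y (mkb m n.+1 (s, rcons t' (- n%:Z))).
      by rewrite A1 scaleNr addrC addrK.
    have K2 : mkb m n (s, t) = (- c) *: mkb m n (s2, t') + actE y (mkb m n (s, t')).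
      by rewrite A2 scaleNr addrC addrK.
    rewrite K1 K2 (bar_antilin B1) (bar_antilin B2) /Tr lin_extL -/(Tr _) -/(Tr _).
    apply: eq_comb; first exact: IH''.
    by rewrite (bar_E B1) TrE // IH' (bar_E B2).
  + rewrite addr0 in A1; rewrite addr0 in A2.
    by rewrite -A1 -A2 (bar_E B1) TrE // IH' (bar_E B2).
- have base : forall x y, x \in s -> x \notin t -> y \in t -> x < y.
    move=> x y xs xt yt; rewrite ltNge; apply/negP => yx.
    have yx' : y < x.
      rewrite lt_neqAle yx andbT; apply: contraNneq xt => <-; exact: yt.
    have [y' y't /andP [h1 h2]] := walkup t x xt y yt yx'.
    apply: (negP nb); apply/hasP; exists x => //; apply/hasP; exists y' => //.
    by rewrite h1 h2.
  have iwf := iota_wf hwf hpl.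
  rewrite (mkbK hwf) (mkbK iwf).
  rewrite (psi_fix B2); last first.
    by apply: no_lower_base; rewrite SubK.
  rewrite (Tr_psi_diag B1); last first.
    by apply: (Tr_base (h := Sub (s, t) hwf)); rewrite !SubK.
  rewrite /tr_b SubK /= nth_rcons_size // eqxx take_rcons_size //.
  by rewrite (mkbK hwf).
Qed.

Lemma main_all m n (psi1 : Esp m n.+1 -> Esp m n.+1) (psi2 : Esp m n -> Esp m n) :
  is_bar_involution psi1 -> is_bar_involution psi2 ->
  forall d s t, (mu (s, t) <= d)%N -> wf m n (s, t) -> pl n t ->
  Tr (psi1 (mkb m n.+1 (s, rcons t (- n%:Z)))) = psi2 (mkb m n (s, t)).
Proof.
move=> B1 B2; elim=> [|d IHd] s t hmu hwf hpl; apply: (core B1 B2) hwf hpl => s' t' hlt.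
  by exfalso; lia.
by apply: IHd; lia.
Qed.

Lemma mkb_val m k (f : idx m k) : mkb m k (val f) = Kb f.
Proof. by rewrite (mkbK (valP f)); congr Kb; apply: val_inj; rewrite SubK. Qed.

Lemma key m n (psi1 : Esp m n.+1 -> Esp m n.+1) (psi2 : Esp m n -> Esp m n) f :
  is_bar_involution psi1 -> is_bar_involution psi2 -> plus_idx f ->
  Tr (psi1 (Kb f)) = psi2 (tr_b f).
Proof.
move=> B1 B2 hf.
case/and4P: (valP f) => /eqP sf1 /eqP sf2 hf1 hf2.
case: (nth 0 (val f).2 n =P - n%:Z) => [ln|ln].
- pose t0 := take n (val f).2.
  have et : (val f).2 = rcons t0 (- n%:Z) by rewrite /t0 {1}(rcons_take_nth _ _ sf2) ln.
  have st0 : size t0 = n by rewrite size_take sf2 leqnn.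
  have ht0 : sdec t0 by apply: take_sorted.
  have hw : wf m n ((val f).1, t0) by apply/and4P; split => //=; apply/eqP.
  have hp : pl n t0.
    rewrite /pl; case: eqP => //= n0.
    rewrite /t0 nth_take; last by lia.
    have H := sorted_ltn_nth gt_trans 0 hf2.
    have h : nth 0 (val f).2 n < nth 0 (val f).2 n.-1.
      by apply: H; rewrite ?inE ?sf2 //; lia.
    move: h; rewrite ln; move: (nth 0 (val f).2 n.-1) => a; lia.
  have := main_all B1 B2 (leqnn _) hw hp.
  rewrite -et -surjective_pairing mkb_val => ->.
  by rewrite /tr_b ln eqxx.
- have tr0 : tr_b f = 0 by rewrite /tr_b; case: eqP.
  rewrite tr0 (psi0 (bar_antilin B2) (bar_inv B2)) (Tr_psi_diag B1) //.
  move=> g ne /bruhat_inv [sz _ _ lst].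
  case/and4P: (valP g) => /eqP sg1 /eqP sg2 _ _.
  move: lst; rewrite /as_fun size_cat sg1 sg2.
  have -> : (m + n.+1).-1 = (m + n)%N by lia.
  rewrite !nth_cat sf1 sg1 ltnNge leq_addr /= addKn => lst.
  move: hf; rewrite /plus_idx /= => hf.
  rewrite /tr_b; case: eqP => // lg; exfalso.
  move: hf lst ln; rewrite lg; move: (nth 0 (val f).2 n) => a; lia.
Qed.

Unset Implicit Arguments.
Set Strict Implicit.

Theorem proposition4p29 (m n : nat)
    (psi1 : Esp m n.+1 -> Esp m n.+1) (psi2 : Esp m n -> Esp m n) :
  is_bar_involution psi1 -> is_bar_involution psi2 ->
  forall u : Esp m n.+1, in_Eplus u -> Tr (psi1 u) = psi2 (Tr u).
Proof.
move=> B1 B2 u hu.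
have L : Tr (psi1 u) = \sum_(f <- msupp u) barQ (u@_f) *: Tr (psi1 (Kb f)).
  rewrite {1}(malgE u) (psi_sumZ _ _ _ (bar_antilin B1) (bar_inv B1)) /Tr lin_ext_sum.
  by apply: eq_bigr => f _; apply: lin_extZ.
have R : psi2 (Tr u) = \sum_(f <- msupp u) barQ (u@_f) *: psi2 (tr_b f).
  rewrite /Tr /lin_ext; exact: (psi_sumZ _ _ _ (bar_antilin B2) (bar_inv B2)).
rewrite L R; apply: eq_big_seq => f fu.
by rewrite (key B1 B2 (hu f fu)).
Qed.
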